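(* Consider $N$ users indexed by $\mathcal{U}=\{1,\dots,N\}$ with fixed channel power gains $h_1,\dots,h_N>0$ and noise variance $\eta>0$. For each $i\in\mathcal{U}$ let the strategy set be $\mathcal{P}^i=[0,P_i^{max}]$ with $P_i^{max}>0$, and for $\mathbf{P}=(P_1,\dots,P_N)\in\prod_{i}\mathcal{P}^i$ let $$r_i(\mathbf{P})=\log_2\!\Big(1+\frac{h_iP_i}{\eta+\sum_{j\neq i}h_jP_j}\Big).$$ Given targets $\theta_1,\dots,\theta_N$, a profile $\mathbf{P}^+\in\prod_i\mathcal{P}^i$ is a satisfaction equilibrium (SE) if $r_i(\mathbf{P}^+)\ge\theta_i$ for every $i\in\mathcal{U}$. Then the set of satisfaction equilibria is convex, closed and bounded (as a subset of $\mathbb{R}^N$).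
   Context: This is the game $\mathcal{G}=\{\mathcal{U},\{\mathcal{P}^i\},\{r_i\},\{\theta_i\}\}$: $r_i$ is the bandwidth-normalized throughput of user $i$ (a base-2 logarithm of one plus its signal-to-interference-and-noise ratio), $\theta_i$ is user $i$'s target throughput. *)

(* Defs.v *)
From HB Require Import structures.
From mathcomp Require Import all_boot all_order all_algebra.
From mathcomp Require Import all_classical all_reals all_analysis.
Set Implicit Arguments. Unset Strict Implicit. Unset Printing Implicit Defensive.
Import Order.TTheory GRing.Theory Num.Theory.
Local Open Scope ring_scope.
Local Open Scope classical_set_scope.

Definition log2 {R : realType} (x : R) : R := ln x / ln 2.

Definition rate {R : realType} {N : nat} (h : 'I_N -> R) (eta : R)
  (P : 'rV[R]_N) (i : 'I_N) : R :=
  log2 (1 + h i * P ord0 i / (eta + \sum_(j < N | j != i) h j * P ord0 j)).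

Definition feasible {R : realType} {N : nat} (Pmax : 'I_N -> R) (P : 'rV[R]_N) :=
  forall i : 'I_N, 0 <= P ord0 i <= Pmax i.

Definition SE_set {R : realType} {N : nat} (h : 'I_N -> R) (eta : R)
  (Pmax theta : 'I_N -> R) : set 'rV[R]_N :=
  [set P | feasible Pmax P /\ forall i : 'I_N, theta i <= rate h eta P i].

(* Main.v *)
Require Import Defs.
From HB Require Import structures.
From mathcomp Require Import all_boot all_order all_algebra.
From mathcomp Require Import all_classical all_reals all_analysis.
From mathcomp Require Import ring lra.
Import Order.TTheory GRing.Theory Num.Theory.
Import numFieldNormedType.Exports.
Local Open Scope ring_scope.
Local Open Scope classical_set_scope.

Section aux.
Variables (R : realType) (N : nat) (h : 'I_N -> R) (eta : R) (Pmax theta : 'I_N -> R).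
Hypotheses (hpos : forall i, 0 < h i) (etapos : 0 < eta).

Definition aa i : R := expR (theta i * ln 2) - 1.
Definition DD (P : 'rV[R]_N) i : R := eta + \sum_(j < N | j != i) h j * P ord0 j.
Definition gg i (P : 'rV[R]_N) : R := h i * P ord0 i - aa i * DD P i.

Lemma key (P : 'rV[R]_N) i : feasible Pmax P ->
  (theta i <= rate h eta P i) <-> (0 <= gg i P).
Proof.
move=> fP.
have D0 : 0 < DD P i.
  rewrite /DD; apply: ltr_wpDr => //; apply: sumr_ge0 => j _.
  by apply: mulr_ge0; [exact: ltW | case/andP: (fP j)].
have ln2 : 0 < ln (2 : R) by apply: ln_gt0; lra.
have x0 : 0 <= h i * P ord0 i / DD P i.
  by apply: divr_ge0; [apply: mulr_ge0; [exact: ltW | case/andP: (fP i)] | exact: ltW].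
rewrite /rate /log2 -/(DD P i) ler_pdivlMr // -ler_expR lnK; last first.
  by rewrite posrE; lra.
rewrite /gg subr_ge0 -lerBlDl -/(aa i) -ler_pdivlMr //.
Qed.

Lemma gg_conv i (P Q : 'rV[R]_N) (l m : R) : l + m = 1 ->
  gg i (l *: P + m *: Q) = l * gg i P + m * gg i Q.
Proof.
move=> lm; rewrite /gg /DD !mxE.
rewrite (eq_bigr (fun j => l * (h j * P ord0 j) + m * (h j * Q ord0 j))); last first.
  by move=> j _; rewrite !mxE; ring.
rewrite big_split /= -!mulr_sumr.
set S1 := \sum_(_ < _ | _) _; set S2 := \sum_(_ < _ | _) _.
have -> : m = 1 - l by lra.
ring.
Qed.

Lemma cm (c : R) j : continuous (fun P : 'rV[R]_N => c * P ord0 j).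
Proof.
move=> y.
apply: (@continuousM _ _ (fun=> c) (fun P : 'rV[R]_N => P ord0 j) y).
  exact: cst_continuous.
exact: (@coord_continuous R 1 N ord0 j y).
Qed.

Lemma gg_cont i : continuous (gg i).
Proof.
have cS : continuous (fun P : 'rV[R]_N => \sum_(j < N | j != i) h j * P ord0 j).
  apply: continuous_big; first exact: add_continuous.
  move=> j _; exact: cm.
have cD : continuous (fun P : 'rV[R]_N => DD P i).
  move=> y; apply: (@continuousD _ _ _ (fun=> eta) (fun P : 'rV[R]_N => \sum_(j < N | j != i) h j * P ord0 j) y).
    exact: cst_continuous.
  exact: cS.
move=> y; apply: (@continuousB _ _ _ (fun P : 'rV[R]_N => h i * P ord0 i) (fun P => aa i * DD P i) y).
  exact: cm.
apply: (@continuousM _ _ (fun=> aa i) (fun P : 'rV[R]_N => DD P i) y).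
  exact: cst_continuous.
exact: cD.
Qed.
End aux.
Arguments gg {R N} h eta theta i P.
Arguments key {R N h eta Pmax theta} hpos etapos {P} i.
Arguments gg_conv {R N h eta theta} i P Q l m.
Arguments gg_cont {R N} h eta theta i.

Theorem proposition1 (R : realType) (N : nat) (h : 'I_N -> R) (eta : R)
  (Pmax theta : 'I_N -> R)
  (hpos : forall i, 0 < h i) (etapos : 0 < eta) (Pmaxpos : forall i, 0 < Pmax i) :
  convex_set (SE_set h eta Pmax theta) /\
  closed (SE_set h eta Pmax theta) /\
  bounded_set (SE_set h eta Pmax theta).
Proof.
have SEE : SE_set h eta Pmax theta =
   [set P | feasible Pmax P /\ forall i, 0 <= gg h eta theta i P].
  apply/seteqP; split => P [fP HP]; split => // i; first by apply/(key hpos etapos i fP).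
  by apply/(key hpos etapos i fP).
rewrite SEE; split; [|split].
- move=> x y l; rewrite !inE => -[fx gx] -[fy gy].
  have lm : l%:num + (1 - l%:num) = 1 by ring.
  have l0 : 0 <= l%:num by [].
  have l1 : 0 <= (1 - l%:num) by rewrite subr_ge0 le1.
  split => i.
    change (0 <= (l%:num *: x + (1 - l%:num) *: y) ord0 i <= Pmax i).
    rewrite !mxE; case/andP: (fx i) => x0 x1; case/andP: (fy i) => y0 y1.
    apply/andP; split; first by apply: addr_ge0; apply: mulr_ge0.
    nra.
  change (0 <= gg h eta theta i (l%:num *: x + (1 - l%:num) *: y)).
  rewrite gg_conv //.
  by apply: addr_ge0; apply: mulr_ge0.
- have -> : [set P | feasible Pmax P /\ (forall i, 0 <= gg h eta theta i P)] =
    \bigcap_(i in setT) ([set P : 'rV[R]_N | 0 <= P ord0 i] `&`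
      [set P | P ord0 i <= Pmax i] `&` [set P | 0 <= gg h eta theta i P]).
    apply/seteqP; split => P.
      move=> [fP gP] i _; case/andP: (fP i) => ? ?; by split; [split|apply: gP].
    move=> H; split => i; have [[a b] c] := H i I; last done.
    by apply/andP.
  apply: closed_bigI => i _; apply: closedI; [apply: closedI|].
    have H := (@preimage_closed _ _ (fun P : 'rV[R]_N => P ord0 i) _ _ (@closed_ge R 0)). apply: H.
    move=> z _; exact: coord_continuous.
    have H := (@preimage_closed _ _ (fun P : 'rV[R]_N => P ord0 i) _ _ (@closed_le R (Pmax i))). apply: H.
    move=> z _; exact: coord_continuous.
    have H := (@preimage_closed _ _ (gg h eta theta i) _ _ (@closed_ge R 0)). apply: H.
    move=> z _; exact: gg_cont.
- rewrite /bounded_near.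
  exists (\sum_i Pmax i); split; first exact: num_real.
  move=> M BM P [fP _].
  have B0 : 0 <= \sum_i Pmax i by apply: sumr_ge0 => i _; exact: ltW.
  rewrite /Num.Def.normr /= mx_normrE.
  apply: bigmax_le; first lra.
  move=> [a b] _ /=; rewrite (ord1 a).
  case/andP: (fP b) => b0 b1.
  rewrite ger0_norm //.
  apply: (le_trans b1); apply: ltW; apply: (le_lt_trans _ BM).
  rewrite (bigD1 b) //= lerDl; apply: sumr_ge0 => i _; exact: ltW.
Qed.
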